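(* Let $V=\{1,\dots,n\}$ and let $H=(V,E)$ with $E=\{e\subseteq V : 2\le|e|\le 3\}$. The toric ideal $I_H$ is generated by polynomials of degree $2$ and $3$ (quadrics and cubics). In particular, for $H'=(V,E')$ with $E'=\{e\subseteq V : |e|\ge 2\}$, the toric ideal $I_{H'}$ — which is the ideal of the image of the first tangential variety $\mathrm{Tan}((\mathbb P^1)^n)$ in higher cumulant coordinates — is generated in degrees $2$ and $3$.
   Context: For a hypergraph $H=(V,E)$ (edges are nonempty subsets of $V=\{1,\dots,n\}$, no repeated edges) and a field $K$, the toric ideal $I_H$ is the kernel of the $K$-algebra homomorphism $K[t_e : e\in E]\to K[x_1,\dots,x_n]$, $t_e\mapsto\prod_{j\in e}x_j$. By a result of Sturmfels and Zwiernik, the set of polynomials vanishing on the image of $\mathrm{Tan}((\mathbb P^1)^n)$ in higher cumulants is exactly $I_{H'}$ for the hypergraph $H'$ whose edges are all subsets of $V$ of size at least $2$. *)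

(* Defs.v *)
From HB Require Import structures.
From mathcomp Require Import all_boot all_algebra.
From mathcomp Require Import mpoly.
Set Implicit Arguments. Unset Strict Implicit. Unset Printing Implicit Defensive.
Import GRing.Theory.
Local Open Scope ring_scope.

(* A hypergraph on V = 'I_n (i.e. {1..n} relabelled as {0..n-1}) is given by
   its edge set E : {set {set 'I_n}} (edges are subsets, automatically without
   repetition).  The variables t_e of K[t_e : e in E] are indexed by
   'I_#|E| through the enumeration  enum_val : 'I_#|E| -> {set 'I_n}. *)

Definition edge_of (n : nat) (E : {set {set 'I_n}}) (i : 'I_#|E|) : {set 'I_n} :=
  enum_val i.

Definition toric_images (K : fieldType) (n : nat) (E : {set {set 'I_n}})
  : #|E|.-tuple {mpoly K[n]} :=
  [tuple \prod_(j in edge_of i) 'X_j | i < #|E|].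

Definition toric_ideal (K : fieldType) (n : nat) (E : {set {set 'I_n}})
  (p : {mpoly K[#|E|]}) : Prop :=
  comp_mpoly (toric_images K E) p = 0.

Definition in_ideal_gen (R : comRingType) (G : seq R) (p : R) : Prop :=
  exists c : 'I_(size G) -> R, p = \sum_(i < size G) c i * G`_i.

Definition total_degree (k : nat) (R : ringType) (p : {mpoly R[k]}) : nat :=
  (msize p).-1.

Definition generated_in_degrees_2_3 (K : fieldType) (k : nat)
  (I : {mpoly K[k]} -> Prop) : Prop :=
  exists G : seq {mpoly K[k]},
    (forall g, g \in G -> g != 0 /\ (total_degree g = 2%N \/ total_degree g = 3%N)) /\
    (forall p, I p <-> in_ideal_gen G p).

Definition edges_2_3 (n : nat) : {set {set 'I_n}} :=
  [set e : {set 'I_n} | (2 <= #|e| <= 3)%N].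

Definition edges_ge2 (n : nat) : {set {set 'I_n}} :=
  [set e : {set 'I_n} | (2 <= #|e|)%N].

(* Main.v *)
Require Import Defs.
From HB Require Import structures.
From mathcomp Require Import all_boot all_algebra.
From mathcomp Require Import mpoly.
From mathcomp Require Import zify.
Set Implicit Arguments. Unset Strict Implicit. Unset Printing Implicit Defensive.

Ltac clear_nonarith :=
  repeat match goal with
  | H : ?T |- _ =>
    match T with
    | @eq nat _ _ => fail 1
    | is_true (leq _ _) => fail 1
    | is_true (@eq_op _ _ _) => fail 1
    | is_true (negb (@eq_op _ _ _)) => fail 1
    | _ => clear H
    end
  end.
Ltac slia := clear_nonarith; lia.

Section Comb.
Variable V : finType.
Implicit Types (e f g h A B : {set V}) (l s : seq {set V}) (x y u v c a : V).

Definition phi l (v : V) := count (fun e => v \in e) l.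
Definition small l := all (fun e => 2 <= #|e| <= 3) l.
Definition wt l := sumn (map (fun e : {set V} => #|e|) l).

Lemma phi_cat l1 l2 v : phi (l1 ++ l2) v = phi l1 v + phi l2 v.
Proof. exact: count_cat. Qed.

Lemma phi_perm l1 l2 : perm_eq l1 l2 -> phi l1 =1 phi l2.
Proof. by move=> /permP H v; rewrite /phi H. Qed.

Lemma nU1 x A v : x \notin A -> ((v \in x |: A) : nat) = (v == x) + (v \in A).
Proof. by move=> hx; rewrite in_setU1; case: eqP => [->|] //=; rewrite (negbTE hx). Qed.

Lemma nD1 u A v : u \in A -> ((v \in A) : nat) = (v == u) + (v \in A :\ u).
Proof. by move=> hu; rewrite in_setD1; case: eqP => [->|] //=; rewrite hu. Qed.

Lemma n2 x y v : x != y -> ((v \in [set x; y]) : nat) = (v == x) + (v == y).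
Proof. by move=> hxy; rewrite in_set2; case: eqP => [->|] //=; rewrite (negbTE hxy). Qed.

Lemma sum_phi l : \sum_(v : V) phi l v = wt l.
Proof.
elim: l => [|e l IH] /=; first by rewrite big1.
rewrite big_split /= IH; congr (_ + _).
by rewrite -sum1_card [RHS]big_mkcond /=; apply: eq_bigr => i _; case: (i \in e).
Qed.

Lemma wt_bounds l : small l -> 2 * size l <= wt l <= 3 * size l.
Proof. elim: l => [|e l IH] //= /andP [/andP [h1 h2] hl]; have := IH hl; rewrite /wt /=; slia. Qed.

Lemma wt_phi l1 l2 : phi l1 =1 phi l2 -> wt l1 = wt l2.
Proof. by move=> H; rewrite -!sum_phi; apply: eq_bigr => v _; rewrite H. Qed.

Lemma phi_le_size l v : phi l v <= size l.
Proof. exact: count_size. Qed.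

Lemma phi_full l v : phi l v = size l -> forall e, e \in l -> v \in e.
Proof. by move=> /eqP; rewrite /phi -all_count => /allP. Qed.

Lemma mem_rem_neq (T : eqType) (x y : T) (s : seq T) : x != y -> x \in s -> x \in rem y s.
Proof.
elim: s => [|z s IH] //= hxy; rewrite inE => /orP [/eqP exz|hs].
  by subst x; rewrite (negbTE hxy) mem_head.
by case: ifP => _; [exact: hs | rewrite inE IH ?orbT].
Qed.

Lemma phi_allx l x : (forall e, e \in l -> x \in e) -> phi l x = size l.
Proof. by move=> H; apply/eqP; rewrite /phi -all_count; apply/allP. Qed.

Lemma nUdisj A B v : [disjoint A & B] -> ((v \in A :|: B) : nat) = (v \in A) + (v \in B).
Proof.
move=> /disjoint_setI0 H; rewrite in_setU.
have : v \notin A :&: B by rewrite H in_set0.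
by rewrite in_setI; case: (v \in A); case: (v \in B).
Qed.

Lemma cardD1n u A : u \in A -> #|A :\ u| = #|A| - 1.
Proof. by move=> hu; rewrite (cardsD1 u A) hu add1n subn1. Qed.

Lemma cardU1n x A : x \notin A -> #|x |: A| = #|A|.+1.
Proof. by move=> hx; rewrite cardsU1 hx. Qed.

Lemma exists_mem A : 0 < #|A| -> exists x, x \in A.
Proof. by rewrite card_gt0 => /set0Pn. Qed.

Variable E : {set {set V}}.
Hypothesis HE2 : forall e, e \in E -> 2 <= #|e|.
Hypothesis HEs : forall e, 2 <= #|e| <= 3 -> e \in E.
Hypothesis HEsplit : forall e x y, e \in E -> 4 <= #|e| -> x \in e -> y \in e :\ x ->
  e :\ x :\ y \in E.
Variable R : seq {set V} -> seq {set V} -> Prop.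
Hypothesis Rsym : forall l1 l2, R l1 l2 -> R l2 l1.
Hypothesis Rtrans : forall l1 l2 l3, R l1 l2 -> R l2 l3 -> R l1 l3.
Hypothesis Rperm : forall l1 l2, perm_eq l1 l2 -> R l1 l2.
Hypothesis Rcat : forall l l1 l2, R l1 l2 -> R (l ++ l1) (l ++ l2).
Hypothesis Rshort : forall l1 l2, all (mem E) l1 -> all (mem E) l2 ->
  size l1 <= 3 -> size l2 <= 3 -> phi l1 =1 phi l2 -> R l1 l2.

Lemma smallE l : small l -> all (mem E) l.
Proof. by move=> /allP H; apply/allP => e /H; exact: HEs. Qed.

Lemma repl l s rest s' : perm_eq l (s ++ rest) -> small l -> small s' ->
  size s <= 3 -> size s' <= 3 -> phi s =1 phi s' ->
  [/\ R l (s' ++ rest), small (s' ++ rest) & phi (s' ++ rest) =1 phi l].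
Proof.
move=> hp hl hs' hs hs'3 hphi.
have : small (s ++ rest) by rewrite /small -(perm_all _ hp).
rewrite /small all_cat => /andP [hs0 hr].
split.
- have pc (x y : seq {set V}) : perm_eq (x ++ y) (y ++ x) by rewrite perm_catC.
  eapply Rtrans; first exact: (Rperm hp).
  eapply Rtrans; first exact: (Rperm (pc _ _)).
  eapply Rtrans; last exact: (Rperm (pc _ _)).
  by apply: Rcat; apply: Rshort => //; exact: smallE.
- by rewrite /small all_cat hr andbT; exact: hs'.
- by move=> v; rewrite (phi_perm hp v) !phi_cat hphi.
Qed.

Lemma fin l s rest s'' c a : perm_eq l (s ++ rest) -> small l ->
  small ([set c; a] :: s'') -> size s <= 3 -> size s'' <= 2 ->
  phi s =1 phi ([set c; a] :: s'') ->
  exists r, [/\ R l ([set c; a] :: r), small r & phi ([set c; a] :: r) =1 phi l].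
Proof.
move=> hp hl hs' hs hs'' hphi.
have [] := repl hp hl hs' hs _ hphi; first by rewrite /=; slia.
move=> h1 h2 h3; exists (s'' ++ rest); split=> //.
by move: h2 => /andP [].
Qed.

Lemma CE l c a : small l -> 1 < size l -> c != a -> (forall i, phi l i <= phi l c) ->
  (forall i, i != c -> phi l i <= phi l a) -> 0 < phi l a ->
  exists r, [/\ R l ([set c; a] :: r), small r & phi ([set c; a] :: r) =1 phi l].
Proof.
move=> hl hsz hca hc ha ha0.
have smallP e : e \in l -> 2 <= #|e| <= 3 by move=> he; exact: (allP hl).
have hcard2 : #|[set c; a]| = 2 by rewrite cards2 hca.
have allc x : (forall e, e \in l -> x \in e) -> forall e, e \in l -> c \in e.
  move=> Hx; apply: phi_full; apply/eqP; rewrite eqn_leq phi_le_size /=.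
  by rewrite -(phi_allx Hx); exact: hc.
case: (boolP (has (fun f => (c \in f) && (a \in f)) l)) => [/hasP [f hf /andP [cf af]]|hn].
-
  have hp1 := perm_to_rem hf.
  have /andP [f2 f3] := smallP f hf.
  case: (boolP (#|f| == 2)) => [/eqP f2e|f2n].
  + have ef : [set c; a] = f.
      apply/eqP; rewrite eqEcard hcard2 f2e leqnn andbT.
      by apply/subsetP => v; rewrite in_set2 => /orP [/eqP->|/eqP->].
    exists (rem f l); rewrite ef; split.
    * exact: (Rperm hp1).
    * by move: hl; rewrite /small (perm_all _ hp1) => /andP [].
    * by move=> v; rewrite -(phi_perm hp1 v).
  + have acf : a \in f :\ c by rewrite in_setD1 eq_sym hca.
    have : #|f :\ c :\ a| == 1.
      move: (cardsD1 c f) (cardsD1 a (f :\ c)); rewrite cf acf /=.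
      move: f2n; slia.
    case/cards1P => x fx.
    have xf3 : x \in f :\ c :\ a by rewrite fx set11.
    move: (xf3); rewrite !in_setD1 => /and3P [xa xc xf].
    have nf v : ((v \in f) : nat) = (v == c) + (v == a) + (v == x).
      by rewrite (nD1 v cf) (nD1 v acf) fx in_set1 addnA.
    set rest := rem f l.
    have hrest : 0 < size rest.
      by rewrite /rest size_rem // -subn1 subn_gt0.
    have [h hh hcase] : exists2 h, h \in rest & (x \notin h) || (#|h| == 3).
      apply/hasP; apply/negPn/negP => /hasPn H.
      have Hx : forall e, e \in l -> x \in e.
        move=> e he; case: (eqVneq e f) => [->//|ne].
        by have := H e (mem_rem_neq ne he); rewrite negb_or negbK => /andP [].
      have Ha' : forall e, e \in l -> a \in e.
        apply: phi_full; apply/eqP; rewrite eqn_leq phi_le_size /=.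
        by rewrite -(phi_allx Hx); exact: ha.
      have [h0 h0r] : exists h0, h0 \in rest.
        by move: hrest; case: (rest) => [|h0 r0] //= _; exists h0; rewrite mem_head.
      have h0l : h0 \in l by exact: (mem_rem h0r).
      have := H h0 h0r; rewrite negb_or negbK => /andP [xh0 h03].
      have ch0 := allc x Hx h0 h0l.
      have ah0 := Ha' h0 h0l.
      have ach0 : a \in h0 :\ c by rewrite in_setD1 eq_sym hca.
      have xch0 : x \in h0 :\ c :\ a by rewrite !in_setD1 xa xc.
      move: (cardsD1 c h0) (cardsD1 a (h0 :\ c)) (cardsD1 x (h0 :\ c :\ a)).
      rewrite ch0 ach0 xch0 /= => e1 e2 e3.
      have /andP [_ h03'] := smallP h0 h0l.
      move: h03; slia.
    have hl' : h \in l by exact: (mem_rem hh).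
    have hp2 : perm_eq l ([:: f; h] ++ rem h rest).
      apply: (perm_trans hp1); rewrite /= perm_cons; exact: perm_to_rem.
    have /andP [h2 h3] := smallP h hl'.
    case: (boolP (#|h| == 3)) => [/eqP h3e | h3n].
    * have [y hy] : exists y, y \in h :\ x.
        by apply: exists_mem; have := cardsD1 x h; slia.
      move: (hy); rewrite in_setD1 => /andP [yx yh].
      have hyc : #|h :\ y| = 2 by rewrite cardD1n // h3e.
      apply: (@fin _ _ _ [:: [set x; y]; h :\ y] _ _ hp2) => //.
        by rewrite /small /= hcard2 cards2 eq_sym yx hyc.
      by move=> v; rewrite /phi /= nf (nD1 v yh) (n2 v hca) (n2 v (_ : x != y)) 1?eq_sym //; slia.
    * have xh : x \notin h by move: hcase; rewrite (negbTE h3n) orbF.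
      apply: (@fin _ _ _ [:: x |: h] _ _ hp2) => //.
        by rewrite /small /= hcard2 cardU1n //; move: h3n; slia.
      by move=> v; rewrite /phi /= nf (nU1 v xh) (n2 v hca); slia.
-
  have hnf e : e \in l -> c \in e -> a \notin e.
    by move=> he ce; apply/negP => ae; move/hasPn: hn => /(_ e he); rewrite ce ae.
  have [f hf cf] : exists2 f, f \in l & c \in f.
    by apply/hasP; rewrite has_count; apply: leq_trans ha0 (hc a).
  have [g hg ag] : exists2 g, g \in l & a \in g.
    by apply/hasP; rewrite has_count.
  have af := hnf f hf cf.
  have cg : c \notin g by apply/negP => cg; move: (hnf g hg cg); rewrite ag.
  have gf : g != f by apply/eqP => e; move: cg; rewrite e cf.
  have hg' : g \in rem f l := mem_rem_neq gf hg.
  have hp : perm_eq l ([:: f; g] ++ rem g (rem f l)).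
    apply: (perm_trans (perm_to_rem hf)); rewrite /= perm_cons; exact: perm_to_rem.
  set F := f :\ c; set G := g :\ a.
  have nf v : ((v \in f) : nat) = (v == c) + (v \in F) by rewrite (nD1 v cf).
  have ng v : ((v \in g) : nat) = (v == a) + (v \in G) by rewrite (nD1 v ag).
  have /andP [f2 f3] := smallP f hf.
  have /andP [g2 g3] := smallP g hg.
  have cF : #|F| = #|f| - 1 by rewrite cardD1n.
  have cG : #|G| = #|g| - 1 by rewrite cardD1n.
  case: (boolP ((#|F| == 2) && (#|G| == 2))) => [/andP [/eqP F2 /eqP G2]|nB1].
    apply: (@fin _ _ _ [:: F; G] _ _ hp) => //.
      by rewrite /small /= hcard2 F2 G2.
    by move=> v; rewrite /phi /= nf ng n2 //; slia.
  case: (boolP [disjoint F & G]) => [dFG|ndFG].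
    apply: (@fin _ _ _ [:: F :|: G] _ _ hp) => //.
      rewrite /small /= hcard2 cardsU (disjoint_setI0 dFG) cards0 subn0 /=.
      by move: nB1; rewrite negb_and; slia.
    by move=> v; rewrite /phi /= nf ng n2 // nUdisj //; slia.
  have [x] : exists x, x \in F :&: G.
    by apply/set0Pn; rewrite setI_eq0.
  rewrite in_setI => /andP [xF xG].
  have xf : x \in f by move: xF; rewrite in_setD1 => /andP [].
  have xg : x \in g by move: xG; rewrite in_setD1 => /andP [].
  set P := if #|F| == 1 then G else F.
  have [xP P1 P2 nFG] : [/\ x \in P, 1 <= #|P|, #|P| <= 2 &
       forall v, ((v \in F) : nat) + (v \in G) = (v == x) + (v \in P)].
    rewrite /P; case: (boolP (#|F| == 1)) => [/cards1P [z Fz]|F1].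
      have zx : z = x by move: xF; rewrite Fz in_set1 => /eqP.
      split => //; first by rewrite cG; slia.
        by rewrite cG; slia.
      by move=> v; rewrite Fz in_set1 zx.
    have G1 : #|G| == 1 by move: nB1 F1; rewrite negb_and; slia.
    move/cards1P: G1 => [z Gz].
    have zx : z = x by move: xG; rewrite Gz in_set1 => /eqP.
    split => //; first by rewrite cF; slia.
      by rewrite cF; slia.
    by move=> v; rewrite Gz in_set1 zx addnC.
  set rest2 := rem g (rem f l).
  have [h hh xh] : exists2 h, h \in rest2 & x \notin h.
    apply/hasP; apply/negPn/negP => /hasPn H.
    have Hx : forall e, e \in l -> x \in e.
      move=> e he; case: (eqVneq e f) => [->//|nef].
      case: (eqVneq e g) => [->//|neg].
      by have := H e (mem_rem_neq neg (mem_rem_neq nef he)); rewrite negbK.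
    by move: cg; rewrite (allc x Hx g hg).
  have hl' : h \in l by exact: (mem_rem (mem_rem hh)).
  have /andP [h2 h3] := smallP h hl'.
  have hp3 : perm_eq l ([:: f; g; h] ++ rem h rest2).
    apply: (perm_trans hp); rewrite /= !perm_cons; exact: perm_to_rem.
  have [u uh uP] : exists2 u, u \in h & u \notin P.
    case: (boolP (h \subset P)) => [sub0|/subsetPn [u uh uP]]; last by exists u.
    have sub : h \subset P :\ x.
      apply/subsetP => w wh; rewrite in_setD1 (subsetP sub0 w wh) andbT.
      by apply: contraNneq xh => <-.
    have := subset_leq_card sub; rewrite cardD1n //; slia.
  have ux : u != x by apply: contraNneq xh => <-.
  apply: (@fin _ _ _ [:: u |: P; x |: (h :\ u)] _ _ hp3) => //.
    have xhu : x \notin h :\ u by rewrite in_setD1 negb_and xh orbT.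
    rewrite /small /= hcard2 !cardU1n // cardD1n //; slia.
  have xhu : x \notin h :\ u by rewrite in_setD1 negb_and xh orbT.
  move=> v; rewrite /phi /= nf ng n2 // !nU1 // (nD1 v uh).
  have := nFG v; slia.
Qed.

Lemma main_small N : forall l1 l2, small l1 -> small l2 -> wt l1 <= N ->
  phi l1 =1 phi l2 -> R l1 l2.
Proof.
elim: N => [|N IH] l1 l2 h1 h2 hw hphi.
all: case: (boolP ((size l1 <= 3) && (size l2 <= 3))) => [/andP [s1 s2]|hs];
  first by apply: Rshort => //; exact: smallE.
all: have hw2 : wt l1 = wt l2 := wt_phi hphi.
all: have /andP [b1 b1'] := wt_bounds h1; have /andP [b2 b2'] := wt_bounds h2.
all: have big : 8 <= wt l1 by move: hs; rewrite negb_and -!ltnNge => /orP [] hs; slia.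
  exfalso; slia.
have sz1 : 1 < size l1 by slia.
have sz2 : 1 < size l2 by slia.
have [e he] : exists e, e \in l1.
  by move: sz1; case: (l1) => [|e0 r] //= _; exists e0; rewrite mem_head.
have /andP [e2 _] := allP h1 e he.
have [v1 v1e] : exists v, v \in e by apply: exists_mem; slia.
have [v2 v2e] : exists v, v \in e :\ v1.
  by apply: exists_mem; rewrite cardD1n //; slia.
move: v2e; rewrite in_setD1 => /andP [v21 v2e].
case: (@arg_maxnP _ v1 xpredT (phi l1) isT) => c _ hc.
pose i0 := if v1 == c then v2 else v1.
have i0c : i0 != c by rewrite /i0; case: (eqVneq v1 c) => [e1|//]; rewrite -e1.
have i0e : i0 \in e by rewrite /i0; case: eqP.
case: (@arg_maxnP _ i0 (fun i => i != c) (phi l1) i0c) => a ac ha.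
have hca : c != a by rewrite eq_sym.
have ha0 : 0 < phi l1 a.
  apply: leq_trans (ha i0 i0c); rewrite /phi -has_count; apply/hasP; exists e => //.
have [r1 [R1 sr1 p1]] := CE h1 sz1 hca (fun i => hc i isT) ha ha0.
have [r2 [R2 sr2 p2]] : exists r, [/\ R l2 ([set c; a] :: r), small r &
    phi ([set c; a] :: r) =1 phi l2].
  apply: CE => //; rewrite -?hphi //.
  - by move=> i; rewrite -!hphi; exact: hc.
  - by move=> i ic; rewrite -!hphi; exact: ha.
have hr : phi r1 =1 phi r2.
  by move=> v; apply/eqP; rewrite -(eqn_add2l (v \in [set c; a])); apply/eqP;
    have := p1 v; have := p2 v; rewrite /phi /= => -> ->; exact: hphi.
have wr : wt ([set c; a] :: r1) = wt l1 by exact: wt_phi.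
have hcard2 : #|[set c; a]| = 2 by rewrite cards2 hca.
move: wr; rewrite {1}/wt /= hcard2 -/(wt r1) => wr.
have wle : wt r1 <= N by move: wr hw; clear; lia.
have R12 := IH r1 r2 sr1 sr2 wle hr.
apply: Rtrans R1 _; apply: Rtrans _ (Rsym R2).
exact: (Rcat [:: [set c; a]] R12).
Qed.

Lemma chop_edge k : forall e, #|e| <= k -> e \in E ->
  exists l', [/\ small l', phi l' =1 phi [:: e] & R [:: e] l'].
Proof.
elim: k => [|k IH] e hk he.
  by exfalso; have := HE2 he; slia.
case: (leqP #|e| 3) => h3.
  exists [:: e]; split => //; first by rewrite /small /= (HE2 he) h3.
  exact: (Rperm (perm_refl _)).
have [x xe] : exists x, x \in e by apply: exists_mem; slia.
have [y ye] : exists y, y \in e :\ x by apply: exists_mem; rewrite cardD1n //; slia.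
have e'E := HEsplit he h3 xe ye.
move: (ye); rewrite in_setD1 => /andP [yx ye0].
have ce' : #|e :\ x :\ y| = #|e| - 2 by rewrite !cardD1n //; slia.
have [l'' [s'' p'' R'']] := IH (e :\ x :\ y) (ltac:(slia)) e'E.
have nxy v : ((v \in e) : nat) = (v == x) + (v == y) + (v \in e :\ x :\ y).
  by rewrite (nD1 v xe) (nD1 v ye) addnA.
have hxy : x != y by rewrite eq_sym.
have cxy : #|[set x; y]| = 2 by rewrite cards2 hxy.
exists ([set x; y] :: l''); split.
- by rewrite /small /= cxy.
- by move=> v; move: (p'' v); rewrite /phi /= => ->; rewrite nxy (n2 v hxy) !addn0.
- apply: (Rtrans (l2 := [:: [set x; y]; e :\ x :\ y])).
    apply: Rshort => //=; rewrite ?he ?e'E ?andbT //.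
      by apply: HEs; rewrite cxy.
    by move=> v; rewrite /phi /= nxy (n2 v hxy) !addn0.
  exact: (Rcat [:: [set x; y]] R'').
Qed.

Lemma chop l : all (mem E) l -> exists l', [/\ small l', phi l' =1 phi l & R l l'].
Proof.
elim: l => [_|e l0 IH0 /= /andP [he hl]].
  by exists [::]; split => //; exact: (Rperm (perm_refl _)).
have [le [s1 p1 r1]] := chop_edge (leqnn _) he.
have [k0 [s0 p0 r0]] := IH0 hl.
exists (le ++ k0); split.
- by rewrite /small all_cat; apply/andP; split.
- by move=> v; rewrite phi_cat p1 p0 /phi /= addn0.
- have pc (x y : seq {set V}) : perm_eq (x ++ y) (y ++ x) by rewrite perm_catC.
  apply: (Rtrans (l2 := le ++ l0)); last exact: (Rcat le r0).
  apply: (Rtrans (l2 := l0 ++ [:: e])); first exact: (Rperm (pc [:: e] l0)).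
  apply: (Rtrans (l2 := l0 ++ le)); first exact: (Rcat l0 r1).
  exact: (Rperm (pc _ _)).
Qed.

Theorem comb_all l1 l2 : all (mem E) l1 -> all (mem E) l2 -> phi l1 =1 phi l2 -> R l1 l2.
Proof.
move=> h1 h2 hp.
have [m1 [s1 p1 r1]] := chop h1.
have [m2 [s2 p2 r2]] := chop h2.
apply: (Rtrans r1); apply: (Rtrans _ (Rsym r2)).
apply: (main_small s1 s2 (leqnn _)).
by move=> v; rewrite p1 p2.
Qed.

End Comb.

Import GRing.Theory.
Local Open Scope ring_scope.

Section Ideal.
Variable (R : comNzRingType) (G : seq R).
Local Notation J := (in_ideal_gen G).

Lemma J0 : J 0.
Proof. by exists (fun _ => 0); rewrite big1 // => i _; rewrite mul0r. Qed.

Lemma JD p q : J p -> J q -> J (p + q).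
Proof.
move=> [c1 ->] [c2 ->]; exists (fun i => c1 i + c2 i).
by rewrite -big_split /=; apply: eq_bigr => i _; rewrite mulrDl.
Qed.

Lemma JM r p : J p -> J (r * p).
Proof.
move=> [c ->]; exists (fun i => r * c i).
by rewrite mulr_sumr; apply: eq_bigr => i _; rewrite mulrA.
Qed.

Lemma JN p : J p -> J (- p).
Proof. by move=> h; rewrite -mulN1r; exact: JM. Qed.

Lemma JB p q : J p -> J q -> J (p - q).
Proof. by move=> hp hq; apply: JD => //; exact: JN. Qed.

Lemma JG g : g \in G -> J g.
Proof.
move=> hg; have hg0 := hg; rewrite -index_mem in hg.
exists (fun j => (j == Ordinal hg)%:R).
rewrite (bigD1 (Ordinal hg)) //= eqxx mul1r big1 ?addr0.
  by rewrite nth_index.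
by move=> j /negbTE ->; rewrite mul0r.
Qed.

Lemma Jsum (I : Type) (r : seq I) (F : I -> R) : (forall i, J (F i)) -> J (\sum_(i <- r) F i).
Proof. by move=> h; apply: big_ind => //; [exact: J0 | exact: JD]. Qed.
End Ideal.

Section Alg.
Variable K : fieldType.
Variable n : nat.
Variable E : {set {set 'I_n}}.
Local Notation k := #|E|.
Local Notation P := {mpoly K[k]}.
Local Notation Q := {mpoly K[n]}.

Definition uE (e : {set 'I_n}) : 'X_{1..k} :=
  if [pick i | edge_of i == e] is Some i then U_(i)%MM else 0%MM.
Definition tl (l : seq {set 'I_n}) : P := 'X_[\sum_(e <- l) uE e].
Definition cmp (p : P) : Q := comp_mpoly (toric_images K E) p.

Lemma uE_edge (i : 'I_k) : uE (edge_of i) = U_(i)%MM.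
Proof.
rewrite /uE; case: pickP => [j /eqP hj|/(_ i)]; last by rewrite eqxx.
by congr (U_(_))%MM; apply: enum_val_inj.
Qed.

Lemma uE_mem e : e \in E -> exists i : 'I_k, edge_of i = e /\ uE e = U_(i)%MM.
Proof.
move=> he; exists (enum_rank_in he e); rewrite -uE_edge /edge_of.
by rewrite enum_rankK_in.
Qed.

Lemma tl_cons e l : tl (e :: l) = 'X_[uE e] * tl l.
Proof. by rewrite /tl big_cons mpolyXD. Qed.

Lemma tl_cat l1 l2 : tl (l1 ++ l2) = tl l1 * tl l2.
Proof. by rewrite /tl big_cat mpolyXD. Qed.

Lemma tl_perm l1 l2 : perm_eq l1 l2 -> tl l1 = tl l2.
Proof. by move=> hp; rewrite /tl (perm_big _ hp). Qed.

Definition mon (l : seq {set 'I_n}) : 'X_{1..n} := \sum_(e <- l) \sum_(j in e) U_(j)%MM.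

Lemma monE l v : mon l v = phi l v.
Proof.
rewrite /mon mnm_sumE /phi.
elim: l => [|e l IH]; first by rewrite big_nil.
rewrite big_cons IH /=; congr (_ + _)%N.
rewrite mnm_sumE (eq_bigr (fun j => (j == v) : nat)); last by move=> j _; rewrite mnm1E.
case: (boolP (v \in e)) => hv.
  by rewrite (bigD1 v hv) /= eqxx big1 // => j /andP [_ /negbTE ->].
by rewrite big1 // => j hj; case: eqP hj => // ->; rewrite (negbTE hv).
Qed.

Lemma cmpX (i : 'I_k) : cmp 'X_i = \prod_(j in edge_of i) 'X_j.
Proof. by rewrite /cmp comp_mpolyXU -tnth_nth tnth_mktuple. Qed.

Lemma cmp_tl l : all (mem E) l -> cmp (tl l) = 'X_[mon l].
Proof.
elim: l => [_|e l IH /= /andP [he hl]].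
  by rewrite /tl /mon !big_nil /cmp mpolyX0 comp_mpoly1 mpolyX0.
rewrite {1}/tl big_cons mpolyXD /cmp rmorphM /=; have := IH hl; rewrite /cmp /tl => ->.
rewrite /mon big_cons mpolyXD -/(mon l).
congr (_ * _); have [i [<- ->]] := uE_mem he.
have := cmpX i; rewrite /cmp => ->.
by symmetry; apply: (big_morph (fun m => (mpolyX K m : Q)) (@mpolyXD _ _) (@mpolyX0 _ _)).
Qed.

Lemma mpolyX_inj (m1 m2 : 'X_{1..n}) : ('X_[m1] : Q) = 'X_[m2] -> m1 = m2.
Proof.
move/(congr1 (mcoeff m1)); rewrite !mcoeffX eqxx.
by case: eqP => // _ /eqP; rewrite oner_eq0.
Qed.

Lemma phi_of_cmp l1 l2 : all (mem E) l1 -> all (mem E) l2 ->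
  cmp (tl l1) = cmp (tl l2) -> phi l1 =1 phi l2.
Proof. by move=> h1 h2; rewrite !cmp_tl // => /mpolyX_inj /mnmP H v; rewrite -!monE H. Qed.

Lemma cmp_of_phi l1 l2 : all (mem E) l1 -> all (mem E) l2 ->
  phi l1 =1 phi l2 -> cmp (tl l1) = cmp (tl l2).
Proof. by move=> h1 h2 H; rewrite !cmp_tl //; congr 'X_[_]; apply/mnmP => v; rewrite !monE. Qed.

Definition lm (m : 'X_{1..k}) : seq {set 'I_n} :=
  flatten [seq nseq (m i) (edge_of i) | i <- enum 'I_k].

Lemma lm_mem m : all (mem E) (lm m).
Proof.
apply/allP => e; rewrite /lm => /flattenP [s /mapP [i _ ->]] /nseqP [-> _].
exact: enum_valP.
Qed.

Lemma tl_lm m : tl (lm m) = 'X_[m].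
Proof.
rewrite /tl; congr 'X_[_]; apply/mnmP => v.
rewrite mnm_sumE /lm big_flatten /= big_map big_enum /=.
rewrite (bigD1 v) //= [X in (_ + X)%N]big1 => [|i iv].
  rewrite big_nseq uE_edge mnm1E eqxx addn0.
  by elim: (m v) => //= c ->.
rewrite big_nseq uE_edge mnm1E (negbTE iv).
by elim: (m i) => //= c ->.
Qed.

Local Notation B := ('X_{1..k < 4})%type.

Definition Gpred (ab : B * B) : bool :=
  (cmp 'X_[ab.1] == cmp 'X_[ab.2]) &&
  ((total_degree ('X_[ab.1] - 'X_[ab.2] : P) == 2) ||
   (total_degree ('X_[ab.1] - 'X_[ab.2] : P) == 3)).

Definition Gs : seq P := map (fun ab : B * B => ('X_[ab.1] - 'X_[ab.2] : P)) (enum Gpred).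

Lemma Gs_prop g : g \in Gs -> g != 0 /\ (total_degree g = 2 \/ total_degree g = 3).
Proof.
case/mapP => ab; rewrite mem_enum => /andP [_ /orP hd] ->.
have hd' : total_degree ('X_[ab.1] - 'X_[ab.2] : P) = 2 \/
           total_degree ('X_[ab.1] - 'X_[ab.2] : P) = 3.
  by case: hd => /eqP ->; [left|right].
split => //; apply/eqP => h0; move: hd'; rewrite h0 /total_degree.
have h00 : msize (0 : P) = 0 by apply/eqP; rewrite msize_poly_eq0.
rewrite h00 /=; case => //.
Qed.

Lemma Gs_ker g : g \in Gs -> cmp g = 0.
Proof.
case/mapP => ab; rewrite mem_enum => /andP [/eqP h _] ->.
by rewrite /cmp raddfB /= -/(cmp _) -/(cmp _) h subrr.
Qed.

Lemma Gs_mem (m1 m2 : 'X_{1..k}) (h1 : (mdeg m1 < 4)%N) (h2 : (mdeg m2 < 4)%N) :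
  cmp 'X_[m1] = cmp 'X_[m2] ->
  (total_degree ('X_[m1] - 'X_[m2] : P) = 2 \/ total_degree ('X_[m1] - 'X_[m2] : P) = 3) ->
  ('X_[m1] - 'X_[m2] : P) \in Gs.
Proof.
move=> hc hd; apply/mapP; exists (BMultinom h1, BMultinom h2) => //.
rewrite mem_enum unfold_in /Gpred /= hc eqxx /=; case: hd => ->. all: by [].
Qed.

Lemma td_bin (m1 m2 : 'X_{1..k}) : m1 != m2 ->
  total_degree ('X_[m1] - 'X_[m2] : P) = maxn (mdeg m1) (mdeg m2).
Proof.
move=> hne; rewrite /total_degree.
have le : (msize ('X_[m1] - 'X_[m2] : P) <= (maxn (mdeg m1) (mdeg m2)).+1)%N.
  apply: leq_trans (msizeD_le _ _) _.
  by rewrite msizeN !msizeX -maxnSS.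
have g1 : (mdeg m1 < msize ('X_[m1] - 'X_[m2] : P))%N.
  apply: msize_mdeg_lt; rewrite mcoeff_msupp mcoeffB !mcoeffX eqxx (eq_sym m2 m1) (negbTE hne).
  by rewrite subr0 oner_eq0.
have g2 : (mdeg m2 < msize ('X_[m1] - 'X_[m2] : P))%N.
  apply: msize_mdeg_lt; rewrite mcoeff_msupp mcoeffB !mcoeffX eqxx (negbTE hne).
  by rewrite sub0r oppr_eq0 oner_eq0.
have : msize ('X_[m1] - 'X_[m2] : P) = (maxn (mdeg m1) (mdeg m2)).+1.
  by apply/eqP; rewrite eqn_leq le /= gtn_max g1 g2.

by move=> ->.
Qed.

Lemma mdeg_tl l : all (mem E) l -> mdeg (\sum_(e <- l) uE e) = size l.
Proof.
elim: l => [_|e l IH /= /andP [he hl]]; first by rewrite big_nil mdeg0.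
by rewrite big_cons mdegD IH //; have [i [_ ->]] := uE_mem he; rewrite mdeg1.
Qed.

Lemma ker_J (Gl : seq P) :
  (forall m1 m2 : 'X_{1..k}, cmp 'X_[m1] = cmp 'X_[m2] -> in_ideal_gen Gl ('X_[m1] - 'X_[m2])) ->
  forall p, cmp p = 0 -> in_ideal_gen Gl p.
Proof.
move=> bin p hp.
pose psi (m : 'X_{1..k}) := cmp 'X_[m].
have ex m : exists m', psi m' == psi m by exists m.
pose r m := xchoose (ex m).
have psir m : psi (r m) = psi m by apply/eqP; exact: (xchooseP (ex m)).
have req m m' : psi m = psi m' -> r m = r m'.
  by move=> e; apply: eq_xchoose => x; rewrite e.
pose mu (m : 'X_{1..k}) := mon (lm m).
have psimu m : psi m = 'X_[mu m] by rewrite /psi -tl_lm cmp_tl // lm_mem.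
have lin (F : 'X_{1..k} -> P) : cmp (\sum_(m <- msupp p) p@_m *: F m) =
    \sum_(m <- msupp p) p@_m *: cmp (F m).
  by rewrite /cmp raddf_sum; apply: eq_bigr => m _; exact: comp_mpolyZ.
pose q := \sum_(m <- msupp p) p@_m *: ('X_[r m] : P).
have -> : p = \sum_(m <- msupp p) p@_m *: ('X_[m] - 'X_[r m] : P) + q.
  rewrite /q -big_split /= {1}(mpolyE p); apply: eq_bigr => m _.
  by rewrite -scalerDr subrK.
have cq : cmp q = 0.
  rewrite -hp /q (lin (fun m => 'X_[r m])) [in RHS](mpolyE p) (lin (fun m => 'X_[m])); apply: eq_bigr => m _.
  by have := psir m; rewrite /psi => ->.
have q0 : q = 0.
  apply/mpolyP => mu0; rewrite mcoeff0 /q raddf_sum /=.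
  under eq_bigr do rewrite mcoeffZ mcoeffX.
  case: (eqVneq (r mu0) mu0) => [hfix|nfix]; last first.
    rewrite big1 // => m _; case: eqP => [e|_]; last by rewrite mulr0.
    by move: nfix; rewrite -{1}e (req (r m) m (psir m)) e eqxx.
  transitivity ((cmp q)@_(mu mu0)); last by rewrite cq mcoeff0.
  rewrite /q (lin (fun m => 'X_[r m])) raddf_sum /=.
  apply: eq_bigr => m _; have := psimu (r m); rewrite /psi => ->; rewrite mcoeffZ mcoeffX; congr (_ * (nat_of_bool _)%:R).
  apply/idP/idP; [by move=> /eqP -> | move=> /eqP e]; apply/eqP; rewrite -hfix; apply: req.
  have h1 := psimu mu0; have h2 := psimu (r m); have h3 := psir m.
  by move: h1 h2 h3; rewrite /psi => h1 h2 h3; rewrite -h3 h2 h1 e.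
rewrite q0 addr0; apply: Jsum => m; rewrite -mul_mpolyC; apply: JM; apply: bin.
by have := psir m.
Qed.

Hypothesis HE2 : forall e, e \in E -> (2 <= #|e|)%N.
Hypothesis HEs : forall e : {set 'I_n}, (2 <= #|e| <= 3)%N -> e \in E.
Hypothesis HEsplit : forall (e : {set 'I_n}) x y, e \in E -> (4 <= #|e|)%N -> x \in e -> y \in e :\ x ->
  e :\ x :\ y \in E.

Lemma small_eq l1 l2 : all (mem E) l1 -> all (mem E) l2 -> (size l1 <= 1)%N -> (size l2 <= 1)%N ->
  phi l1 =1 phi l2 -> l1 = l2.
Proof.
have nonempty e : e \in E -> exists v, v \in e.
  by move=> he; apply: exists_mem; have := HE2 he; case: #|e|.
case: l1 => [|e1 [|? ?]] //; case: l2 => [|e2 [|? ?]] //= h1 h2 _ _ H.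
- move: h2 => /andP [/nonempty [v hv] _]; have := H v; rewrite /phi /= hv //.
- move: h1 => /andP [/nonempty [v hv] _]; have := H v; rewrite /phi /= hv //.
- congr [:: _]; apply/setP => v; have := H v; rewrite /phi /= !addn0.
  by case: (v \in e1); case: (v \in e2).
Qed.

Lemma Rshort_alg l1 l2 : all (mem E) l1 -> all (mem E) l2 -> (size l1 <= 3)%N -> (size l2 <= 3)%N ->
  phi l1 =1 phi l2 -> in_ideal_gen Gs (tl l1 - tl l2).
Proof.
move=> h1 h2 s1 s2 H; rewrite /tl.
case: (eqVneq (\sum_(e <- l1) uE e)%MM (\sum_(e <- l2) uE e)%MM) => [e|ne].
  by rewrite e subrr; exact: J0.
apply: JG; apply: Gs_mem; rewrite ?mdeg_tl //.
  exact: (cmp_of_phi h1 h2 H).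
rewrite td_bin // !mdeg_tl //.
case: (leqP 2 (maxn (size l1) (size l2))) => hm.
  have : (maxn (size l1) (size l2) <= 3)%N by rewrite geq_max s1 s2.
  by move: hm; case: (maxn _ _) => [|[|[|[|?]]]] //; [left|right].
move: hm; rewrite gtn_max !ltnS => /andP [a1 a2].
by move: ne; rewrite (small_eq h1 h2 a1 a2 H) eqxx.
Qed.

Theorem gen23 : generated_in_degrees_2_3 (@toric_ideal K n E).
Proof.
exists Gs; split; first exact: Gs_prop.
move=> p; split.
- move=> hp; apply: ker_J hp => m1 m2 hc.
  rewrite -!tl_lm.
  apply: (@comb_all _ E HE2 HEs HEsplit (fun l1 l2 => in_ideal_gen Gs (tl l1 - tl l2))).
  + by move=> l1 l2 h; rewrite -opprB; exact: JN.
  + move=> l1 l2 l3 h12 h23.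
    have -> : tl l1 - tl l3 = (tl l1 - tl l2) + (tl l2 - tl l3) by rewrite addrA subrK.
    exact: JD.
  + by move=> l1 l2 hp'; rewrite (tl_perm hp') subrr; exact: J0.
  + by move=> l l1 l2 h; rewrite !tl_cat -mulrBr; exact: JM.
  + exact: Rshort_alg.
  + exact: lm_mem.
  + exact: lm_mem.
  + by apply: phi_of_cmp; rewrite ?lm_mem // !tl_lm.
- case=> c ->; rewrite /toric_ideal -/(cmp _) /cmp raddf_sum big1 // => i _.
  have h := Gs_ker (mem_nth 0 (ltn_ord i)); move: h; rewrite /cmp => h.
  rewrite [LHS](rmorphM (comp_mpoly (toric_images K E))).
  apply/eqP; rewrite mulf_eq0; apply/orP; right; apply/eqP; exact: h.

Qed.
End Alg.

Lemma edges_2_3_ok (n : nat) :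
  [/\ forall e, e \in edges_2_3 n -> (2 <= #|e|)%N,
      forall e : {set 'I_n}, (2 <= #|e| <= 3)%N -> e \in edges_2_3 n &
      forall (e : {set 'I_n}) x y, e \in edges_2_3 n -> (4 <= #|e|)%N -> x \in e -> y \in e :\ x ->
        e :\ x :\ y \in edges_2_3 n].
Proof.
split.
- by move=> e; rewrite inE => /andP [].
- by move=> e he; rewrite inE.
- by move=> e x y; rewrite inE => /andP [_ h3] h4; move: h3 h4; lia.
Qed.

Lemma edges_ge2_ok (n : nat) :
  [/\ forall e, e \in edges_ge2 n -> (2 <= #|e|)%N,
      forall e : {set 'I_n}, (2 <= #|e| <= 3)%N -> e \in edges_ge2 n &
      forall (e : {set 'I_n}) x y, e \in edges_ge2 n -> (4 <= #|e|)%N -> x \in e -> y \in e :\ x ->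
        e :\ x :\ y \in edges_ge2 n].
Proof.
split.
- by move=> e; rewrite inE.
- by move=> e /andP [he _]; rewrite inE.
- move=> e x y _ h4 xe ye; rewrite inE.
  have := cardsD1 x e; have := cardsD1 y (e :\ x); rewrite xe ye; lia.
Qed.

Theorem theorem5p6 (K : fieldType) (n : nat) :
  generated_in_degrees_2_3 (@toric_ideal K n (edges_2_3 n)) /\
  generated_in_degrees_2_3 (@toric_ideal K n (edges_ge2 n)).
Proof.
split.
- by have [h1 h2 h3] := edges_2_3_ok n; exact: gen23.
- by have [h1 h2 h3] := edges_ge2_ok n; exact: gen23.
Qed.
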